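(* Let $\mathcal{G}$ be an MVPP optional-grabbing pawn game with pawns $[d]$, let $\langle v,P\rangle$ be a configuration, let $j\in[d]$ be the pawn with $v\in V_j$, and let $P'\subseteq P$. (1) If ($j\in P$ implies $j\in P'$) and Player 1 wins from $\langle v,P\rangle$, then Player 1 wins from $\langle v,P'\rangle$. (2) If ($j\notin P'$ implies $j\notin P$) and Player 2 wins from $\langle v,P'\rangle$, then Player 2 wins from $\langle v,P\rangle$.
   Context: A pawn game with $d$ pawns consists of a finite directed graph $(V,E)$, a target set $T\subseteq V$, and sets $V_1,\dots,V_d\subseteq V$, where Pawn $j$ owns the vertices in $V_j$. In an MVPP (multiple vertices per pawn) game, $V_1,\dots,V_d$ form a partition of $V$. A configuration is a pair $\langle v,P\rangle$ with $v\in V$ the token position and $P\subseteq[d]$ the set of pawns controlled by Player 1 (Player 2 controls the rest). At $\langle v,P\rangle$, Player 1 moves the token iff he controls the pawn owning $v$; otherwise Player 2 moves. The mover moves the token to some $u$ with $(v,u)\in E$. Under optional grabbing, after Player $i$ moves, the other player may either leave pawn control unchanged or take one pawn currently controlled by Player $i$ into his own control. Player 1 wins a play iff it visits $T$; otherwise Player 2 wins. A player wins from a configuration if he has a strategy winning against all opponent strategies. *)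

(* Defs.v *)
From mathcomp Require Import all_boot.
Set Implicit Arguments. Unset Strict Implicit. Unset Printing Implicit Defensive.

Section PawnGame.
Variables (V : finType) (d : nat).
Variables (E : rel V) (T : {set V}) (Vs : 'I_d -> {set V}).

(* A configuration <v, P>: token position and set of pawns controlled by Player 1. *)
Definition cfg := (V * {set 'I_d})%type.

Definition mvpp_partition : Prop := forall v : V, exists! j : 'I_d, v \in Vs j.

Definition p1_moves (c : cfg) : bool := [exists j, (c.1 \in Vs j) && (j \in c.2)].

(* A (history-dependent) strategy of a player:
   - smove h c   : the vertex the player moves the token to, when it is his turn
                   at current configuration c after history h (earlier configurations);
   - sgrab h c u : after the opponent moved the token from configuration c to u,
                   either None (leave control unchanged) or Some k (grab pawn k). *)
Record strategy := Strategy {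
  smove : seq cfg -> cfg -> V;
  sgrab : seq cfg -> cfg -> V -> option 'I_d }.

Definition legal1 (s : strategy) : Prop :=
  (forall h c, E c.1 (smove s h c)) /\
  (forall h c u k, sgrab s h c u = Some k -> k \notin c.2).
Definition legal2 (s : strategy) : Prop :=
  (forall h c, E c.1 (smove s h c)) /\
  (forall h c u k, sgrab s h c u = Some k -> k \in c.2).

Definition step (s1 s2 : strategy) (h : seq cfg) (c : cfg) : cfg :=
  if p1_moves c then
    let u := smove s1 h c in
    (u, match sgrab s2 h c u with Some k => c.2 :\ k | None => c.2 end)
  else
    let u := smove s2 h c in
    (u, match sgrab s1 h c u with Some k => k |: c.2 | None => c.2 end).

(* run n = (history before round n, configuration at round n). *)
Fixpoint run (s1 s2 : strategy) (c0 : cfg) (n : nat) : seq cfg * cfg :=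
  match n with
  | 0 => ([::], c0)
  | n'.+1 => let hc := run s1 s2 c0 n' in (rcons hc.1 hc.2, step s1 s2 hc.1 hc.2)
  end.

Definition visits_T (s1 s2 : strategy) (c0 : cfg) : Prop :=
  exists n, (run s1 s2 c0 n).2.1 \in T.

Definition wins1 (c0 : cfg) : Prop :=
  exists s1, legal1 s1 /\ forall s2, legal2 s2 -> visits_T s1 s2 c0.

Definition wins2 (c0 : cfg) : Prop :=
  exists s2, legal2 s2 /\ forall s1, legal1 s1 -> ~ visits_T s1 s2 c0.

End PawnGame.

(* Main.v *)
Require Import Defs.
From mathcomp Require Import all_boot.
Set Implicit Arguments. Unset Strict Implicit. Unset Printing Implicit Defensive.

Section Aux.
Variables (V : finType) (d : nat) (E : rel V) (T : {set V}) (Vs : 'I_d -> {set V}).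
Hypothesis Hpart : mvpp_partition Vs.
Hypothesis Htotal : forall v : V, exists u : V, E v u.

Lemma p1E y j A : y \in Vs j -> p1_moves Vs (y, A) = (j \in A).
Proof.
move=> Hy; have [jy [Hjy Hu]] := Hpart y.
have ej := Hu j Hy.
apply/existsP/idP => [[j' /andP[H1 H2]]|HA]; last by exists j; rewrite Hy.
by rewrite -ej (Hu j' H1).
Qed.

Definition pk (y : V) (Q R : {set 'I_d}) : option 'I_d :=
  [pick k | (y \in Vs k) && (k \in Q) && (k \notin R)].
Definition shrink y (Q R : {set 'I_d}) := if pk y Q R is Some k then Q :\ k else Q.
Definition grow y (R Q : {set 'I_d}) := if pk y Q R is Some k then k |: R else R.

Lemma pk_some y (Q R : {set 'I_d}) k : pk y Q R = Some k -> [/\ y \in Vs k, k \in Q & k \notin R].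
Proof. rewrite /pk; case: pickP => // k' /andP[/andP[H1 H2] H3] [<-]; by split. Qed.

Lemma shrink_ok y (Q R : {set 'I_d}) : R \subset Q ->
  R \subset shrink y Q R /\ p1_moves Vs (y, shrink y Q R) = p1_moves Vs (y, R).
Proof.
move=> RQ; have [jy [Hjy Hu]] := Hpart y.
rewrite /shrink !(p1E _ Hjy); case E1: (pk y Q R) => [k|].
  have [H1 H2 H3] := pk_some E1; have ek := Hu k H1; subst k.
  split; last by rewrite !inE eqxx (negbTE H3).
  apply/subsetP => x xR; rewrite !inE (subsetP RQ _ xR) andbT.
  by apply: contraNneq H3 => <-.
split=> //; move: E1; rewrite /pk; case: pickP => // /(_ jy) /=.
rewrite Hjy /=; case: (jy \in R) (subsetP RQ jy); case: (jy \in Q) => //=.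
by move=> /(_ isT).
Qed.

Lemma grow_ok y (R Q : {set 'I_d}) : R \subset Q ->
  grow y R Q \subset Q /\ p1_moves Vs (y, grow y R Q) = p1_moves Vs (y, Q).
Proof.
move=> RQ; have [jy [Hjy Hu]] := Hpart y.
rewrite /grow !(p1E _ Hjy); case E1: (pk y Q R) => [k|].
  have [H1 H2 H3] := pk_some E1; have ek := Hu k H1; subst k.
  by rewrite !inE eqxx H2; split=> //; rewrite subUset sub1set H2.
split=> //; move: E1; rewrite /pk; case: pickP => // /(_ jy) /=.
rewrite Hjy /=; case: (jy \in R) (subsetP RQ jy); case: (jy \in Q) => //=.
by move=> /(_ isT).
Qed.

Definition nbr (x : V) : V := odflt x [pick u | E x u].
Lemma nbrE x : E x (nbr x).
Proof. rewrite /nbr; case: pickP => //= /(_ _) H; have [u Hu] := Htotal x; by rewrite H in Hu. Qed.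

Fixpoint shad (nxt : seq (cfg V d) -> cfg V d -> cfg V d -> cfg V d)
   (hP : seq (cfg V d)) (cP : cfg V d) (l : seq (cfg V d)) : seq (cfg V d) * cfg V d :=
  match l with [::] => (hP, cP) | c :: l' => shad nxt (rcons hP cP) (nxt hP cP c) l' end.

Definition shadow nxt (P0 : {set 'I_d}) (h : seq (cfg V d)) (c : cfg V d) :=
  match h with [::] => ([::], (c.1, P0)) | c0 :: t => shad nxt [::] (c0.1, P0) (rcons t c) end.

Lemma shad_rcons nxt hP cP l c :
  shad nxt hP cP (rcons l c) =
  (rcons (shad nxt hP cP l).1 (shad nxt hP cP l).2,
   nxt (shad nxt hP cP l).1 (shad nxt hP cP l).2 c).
Proof. by elim: l hP cP => //= a l IH hP cP; rewrite IH. Qed.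

Lemma shadow_rcons nxt P0 h c cn :
  shadow nxt P0 (rcons h c) cn =
  (rcons (shadow nxt P0 h c).1 (shadow nxt P0 h c).2,
   nxt (shadow nxt P0 h c).1 (shadow nxt P0 h c).2 cn).
Proof. by case: h => [|c0 t] //=; rewrite shad_rcons. Qed.

Lemma shadow_pos nxt P0 h c :
  (forall a b c'', (nxt a b c'').1 = c''.1) -> (shadow nxt P0 h c).2.1 = c.1.
Proof.
move=> Hn; elim/last_ind: h c => [//|h c0 _] c.
by rewrite shadow_rcons /= Hn.
Qed.

Lemma size_run s1 s2 c0 n : size (run Vs s1 s2 c0 n).1 = n.
Proof. by elim: n => //= n IH; rewrite size_rcons IH. Qed.


Section Part1.
Variables (P P' : {set 'I_d}) (v : V) (s1 : strategy V d).
Hypothesis Hs1 : legal1 E s1.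

Definition N1 (hP : seq (cfg V d)) (cP c'' : cfg V d) : cfg V d :=
  if p1_moves Vs cP then (c''.1, shrink c''.1 cP.2 c''.2)
  else (c''.1, match sgrab s1 hP cP c''.1 with Some k => k |: cP.2 | None => cP.2 end).

Definition s1' : strategy V d :=
  Strategy (fun h c => smove s1 (shadow N1 P h c).1 (shadow N1 P h c).2)
    (fun h c u => pk u (match sgrab s1 (shadow N1 P h c).1 (shadow N1 P h c).2 u with
                        Some k => k |: (shadow N1 P h c).2.2 | None => (shadow N1 P h c).2.2 end) c.2).

Lemma N1_pos a b c : (N1 a b c).1 = c.1.
Proof. by rewrite /N1; case: ifP. Qed.

Lemma legal_s1' : legal1 E s1'.
Proof.
split=> [h c|h c u k] /=.
  by rewrite -{1}(shadow_pos P h c N1_pos); apply: Hs1.1.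
by move/pk_some => [].
Qed.

Variable s2' : strategy V d.
Hypothesis Hs2' : legal2 E s2'.

Definition r' n := run Vs s1' s2' (v, P') n.

Definition s2 : strategy V d :=
  Strategy (fun h c => let y := (r' (size h).+1).2.1 in if E c.1 y then y else nbr c.1)
           (fun h c u => pk u c.2 (r' (size h).+1).2.2).

Lemma legal_s2 : legal2 E s2.
Proof.
split=> [h c|h c u k] /=; first by case: ifP => // _; apply: nbrE.
by move/pk_some => [].
Qed.

Lemma onestep1 n h c h' c' : size h = n -> r' n = (h', c') ->
  shadow N1 P h' c' = (h, c) -> c.1 = c'.1 -> c'.2 \subset c.2 ->
  p1_moves Vs c = p1_moves Vs c' ->
  N1 h c (step Vs s1' s2' h' c') = step Vs s1 s2 h c /\
  (step Vs s1 s2 h c).1 = (step Vs s1' s2' h' c').1 /\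
  (step Vs s1' s2' h' c').2 \subset (step Vs s1 s2 h c).2 /\
  p1_moves Vs (step Vs s1 s2 h c) = p1_moves Vs (step Vs s1' s2' h' c').
Proof.
move=> Hsz Hr Hsh Hpos Hsub Hp.
rewrite /N1 /step /= Hsz -/(r' n) Hr /= /step -Hp Hsh.
case Hm: (p1_moves Vs c) => /=; rewrite ?Hsh /=.
  set R' := match _ with Some k => _ | None => _ end.
  have HR : R' \subset c'.2.
    by rewrite /R'; case: (sgrab _ _ _ _) => // k; apply: subD1set.
  have [A B] := shrink_ok (smove s1 h c) (subset_trans HR Hsub).
  by rewrite /shrink in A B *; split=> //; split=> //; split=> //; rewrite B.
rewrite Hpos (Hs2'.1 h' c') /=.
set y := smove s2' _ _.
set Q := match _ with Some k => _ | None => _ end.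
have HQ : c'.2 \subset Q.
  by rewrite /Q; case: (sgrab _ _ _ _) => [k|]; [apply: (subset_trans Hsub); apply: subsetUr|].
have [A B] := grow_ok y HQ.
by rewrite /grow in A B *; split=> //; split=> //; split=> //; rewrite -B.
Qed.

Lemma coupling1 : P' \subset P -> p1_moves Vs (v, P) = p1_moves Vs (v, P') ->
  forall n, let r := run Vs s1 s2 (v, P) n in
  shadow N1 P (r' n).1 (r' n).2 = r /\ r.2.1 = (r' n).2.1 /\
  (r' n).2.2 \subset r.2.2 /\ p1_moves Vs r.2 = p1_moves Vs (r' n).2.
Proof.
move=> HPP Hp1; elim=> [|n IH] /=; first by [].
have Hsz := size_run s1 s2 (v, P) n.
have Er : r' n.+1 = (rcons (r' n).1 (r' n).2, step Vs s1' s2' (r' n).1 (r' n).2) by [].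
rewrite -/(r' n); move: IH Hsz; rewrite /= -?/(r' n).
case E1: (r' n) => [h' c']; case: (run Vs s1 s2 (v, P) n) => [h c] /= [Hsh [Hpos [Hsub Hp]]] Hsz.
have [A [B [C D]]] := onestep1 Hsz E1 Hsh Hpos Hsub Hp.
by rewrite shadow_rcons Hsh /= A; split=> //; split.
Qed.

End Part1.

Section Part2.
Variables (P P' : {set 'I_d}) (v : V) (s2' : strategy V d).
Hypothesis Hs2' : legal2 E s2'.

Definition N2 (hS : seq (cfg V d)) (cS c'' : cfg V d) : cfg V d :=
  if p1_moves Vs cS then
    (c''.1, match sgrab s2' hS cS c''.1 with Some k => cS.2 :\ k | None => cS.2 end)
  else (c''.1, grow c''.1 cS.2 c''.2).

Lemma N2_pos a b c : (N2 a b c).1 = c.1.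
Proof. by rewrite /N2; case: ifP. Qed.

Definition s2b : strategy V d :=
  Strategy (fun h c => smove s2' (shadow N2 P' h c).1 (shadow N2 P' h c).2)
    (fun h c u => pk u c.2 (match sgrab s2' (shadow N2 P' h c).1 (shadow N2 P' h c).2 u with
                        Some k => (shadow N2 P' h c).2.2 :\ k | None => (shadow N2 P' h c).2.2 end)).

Lemma legal_s2b : legal2 E s2b.
Proof.
split=> [h c|h c u k] /=.
  by rewrite -{1}(shadow_pos P' h c N2_pos); apply: Hs2'.1.
by move/pk_some => [].
Qed.

Variable s1 : strategy V d.
Hypothesis Hs1 : legal1 E s1.

Definition rr n := run Vs s1 s2b (v, P) n.

Definition s1b : strategy V d :=
  Strategy (fun h c => let y := (rr (size h).+1).2.1 in if E c.1 y then y else nbr c.1)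
           (fun h c u => pk u (rr (size h).+1).2.2 c.2).

Lemma legal_s1b : legal1 E s1b.
Proof.
split=> [h c|h c u k] /=; first by case: ifP => // _; apply: nbrE.
by move/pk_some => [].
Qed.

Lemma onestep2 n h c h' c' : size h' = n -> rr n = (h, c) ->
  shadow N2 P' h c = (h', c') -> c.1 = c'.1 -> c'.2 \subset c.2 ->
  p1_moves Vs c = p1_moves Vs c' ->
  N2 h' c' (step Vs s1 s2b h c) = step Vs s1b s2' h' c' /\
  (step Vs s1 s2b h c).1 = (step Vs s1b s2' h' c').1 /\
  (step Vs s1b s2' h' c').2 \subset (step Vs s1 s2b h c).2 /\
  p1_moves Vs (step Vs s1 s2b h c) = p1_moves Vs (step Vs s1b s2' h' c').
Proof.
move=> Hsz Hr Hsh Hpos Hsub Hp.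
rewrite /N2 /step /= Hsz -/(rr n) Hr /= /step Hp Hsh.
case Hm: (p1_moves Vs c') => /=; rewrite ?Hsh /=.
  rewrite -Hpos (Hs1.1 h c) /=.
  set R' := match _ with Some k => _ | None => _ end.
  have HR : R' \subset c'.2.
    by rewrite /R'; case: (sgrab _ _ _ _) => // k; apply: subD1set.
  have [A B] := shrink_ok (smove s1 h c) (subset_trans HR Hsub).
  by rewrite /shrink in A B *; split=> //; split=> //; split=> //; rewrite B.
set y := smove s2' _ _.
set Q := match _ with Some k => _ | None => _ end.
have HQ : c'.2 \subset Q.
  by rewrite /Q; case: (sgrab _ _ _ _) => [k|]; [apply: (subset_trans Hsub); apply: subsetUr|].
have [A B] := grow_ok y HQ.
by rewrite /grow in A B *; split=> //; split=> //; split=> //; rewrite -B.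
Qed.

Lemma coupling2 : P' \subset P -> p1_moves Vs (v, P) = p1_moves Vs (v, P') ->
  forall n, let r' := run Vs s1b s2' (v, P') n in
  shadow N2 P' (rr n).1 (rr n).2 = r' /\ (rr n).2.1 = r'.2.1 /\
  r'.2.2 \subset (rr n).2.2 /\ p1_moves Vs (rr n).2 = p1_moves Vs r'.2.
Proof.
move=> HPP Hp1; elim=> [|n IH] /=; first by [].
have Hsz := size_run s1b s2' (v, P') n.
rewrite -/(rr n); move: IH Hsz; rewrite /= -?/(rr n).
case E1: (rr n) => [h c]; case: (run Vs s1b s2' (v, P') n) => [h' c'] /= [Hsh [Hpos [Hsub Hp]]] Hsz.
have [A [B [C D]]] := onestep2 Hsz E1 Hsh Hpos Hsub Hp.
by rewrite shadow_rcons Hsh /= A; split=> //; split.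
Qed.

End Part2.
End Aux.

Theorem theorem5 (V : finType) (d : nat) (E : rel V) (T : {set V})
    (Vs : 'I_d -> {set V})
    (Hpart : mvpp_partition Vs)
    (Htotal : forall v : V, exists u : V, E v u)
    (v : V) (P : {set 'I_d}) (j : 'I_d) (P' : {set 'I_d})
    (Hj : v \in Vs j) (HP' : P' \subset P) :
  (((j \in P) -> (j \in P')) -> wins1 E T Vs (v, P) -> wins1 E T Vs (v, P')) /\
  (((j \notin P') -> (j \notin P)) -> wins2 E T Vs (v, P') -> wins2 E T Vs (v, P)).
Proof.
split.
  move=> Hjj [s1 [Hs1 W]].
  have Hp1 : p1_moves Vs (v, P) = p1_moves Vs (v, P').
    rewrite !(p1E Hpart _ Hj); apply/idP/idP => [/Hjj //|]; exact: (subsetP HP').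
  exists (s1' Vs P s1); split; first exact: legal_s1'.
  move=> s2' Hs2'.
  have [n Hn] := W _ (legal_s2 Vs Htotal P P' v s1 s2').
  exists n.
  have [_ [Hpos _]] := coupling1 Hpart s1 Hs2' HP' Hp1 n.
  by rewrite /r' in Hpos; rewrite -Hpos.
move=> Hjj [s2' [Hs2' W]].
have Hp1 : p1_moves Vs (v, P) = p1_moves Vs (v, P').
  rewrite !(p1E Hpart _ Hj); apply/idP/idP => [HjP|]; last exact: (subsetP HP').
  by apply: contraTT HjP => /Hjj.
exists (s2b Vs P' s2'); split; first exact: legal_s2b.
move=> s1 Hs1 [n Hn].
apply: (W _ (legal_s1b Vs Htotal P P' v s2' s1)).
exists n.
have [_ [Hpos _]] := coupling2 Hpart s2' Hs1 HP' Hp1 n.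
by rewrite /rr in Hpos; rewrite -Hpos.
Qed.
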